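(* Let $F$ be a field, $d\ge 2$ an integer and $\alpha\in F$. Identify the set of monic polynomials $x^d+\sum_{i=0}^{d-1}a_ix^i$ over $F$ with the affine space $F^d$ via $(a_0,\dots,a_{d-1})$. Let $\mathcal{P}\subseteq F^d$ be the set of monic polynomials of degree $d$ over $F$ that have a monic polynomial factor $q(x)$ of degree $m$ with $1\le m\le d-1$ whose constant term equals $\alpha$. Then $\mathcal{P}$ is contained in an affine hypersurface of $F^d$, i.e. there is a nonzero polynomial $H\in F[a_0,\dots,a_{d-1}]$ vanishing at every point of $\mathcal{P}$. *)

(* Defs.v *)
From HB Require Import structures.
From mathcomp Require Import all_boot all_algebra.
From mathcomp Require Import mpoly.
Set Implicit Arguments. Unset Strict Implicit. Unset Printing Implicit Defensive.
Import GRing.Theory.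
Local Open Scope ring_scope.

Definition monic_of (F : fieldType) (d : nat) (a : 'I_d -> F) : {poly F} :=
  'X^d + \sum_(i < d) (a i)%:P * 'X^i.

Definition in_calP (F : fieldType) (d : nat) (alpha : F) (a : 'I_d -> F) : Prop :=
  exists q : {poly F},
    [/\ q \is monic, (q %| monic_of a)%R,
        (1 <= (size q).-1 <= d.-1)%N & q`_0 = alpha].

(* Main.v *)
Require Import Defs.
From HB Require Import structures.
From mathcomp Require Import all_boot all_algebra.
From mathcomp Require Import mpoly.
From mathcomp Require Import zify.
Import GRing.Theory.
Local Open Scope ring_scope.
Set Implicit Arguments. Unset Strict Implicit. Unset Printing Implicit Defensive.
Lemma msizeM_le' (F : fieldType) n (p q : {mpoly F[n]}) :
  (msize (p * q) <= (msize p + msize q).-1)%N.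
Proof.
have [->|nz_p] := eqVneq p 0; first by rewrite mul0r msize0.
have [->|nz_q] := eqVneq q 0; first by rewrite mulr0 msize0.
by rewrite msizeM.
Qed.

Lemma msizeX_le (F : fieldType) n (p : {mpoly F[n]}) s k :
  (msize p <= s.+1)%N -> (msize (p ^+ k) <= (k * s).+1)%N.
Proof.
move=> hp; elim: k => [|k ih]; first by rewrite expr0 msize1.
rewrite exprS; apply: leq_trans (msizeM_le' _ _) _.
have := leq_add hp ih; lia.
Qed.

Lemma exists_ker (F : fieldType) N N' (M : 'M[F]_(N, N')) :
  (N' < N)%N -> exists c : 'rV_N, c != 0 /\ c *m M = 0.
Proof.
move=> hN.
have hk : (\rank (kermx M) != 0)%N.
  rewrite mxrank_ker subn_eq0 -ltnNge.
  exact: leq_ltn_trans (rank_leq_col M) hN.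
rewrite mxrank_eq0 in hk.
case: (pickP (fun i => row i (kermx M) != 0)) => [i hi | h].
  exists (row i (kermx M)); split => //.
  by rewrite -row_mul mulmx_ker row0.
case/eqP: hk; apply/matrixP => i j.
have := h i; move/negbFE/eqP/rowP/(_ j); rewrite !mxE => ->.
by [].
Qed.
Lemma msize_prod_le (F : fieldType) n d (phi : 'I_d -> {mpoly F[n]}) (k : 'I_d -> nat) :
  (forall i, msize (phi i) <= 3)%N ->
  (msize (\prod_(i < d) phi i ^+ k i) <= (\sum_(i < d) k i * 2).+1)%N.
Proof.
move=> hphi.
elim/big_rec2: _ => [|i s p _ ih]; first by rewrite msize1.
apply: leq_trans (msizeM_le' _ _) _.
have := leq_add (msizeX_le (k i) (hphi i)) ih; lia.
Qed.

Lemma pow_ineq d n K : (n < d)%N -> K = ((2 * d) ^ n)%N ->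
  ((2 * d * K).+1 ^ n < K.+1 ^ d)%N.
Proof.
move=> hnd hK.
have h1 : ((2 * d * K).+1 <= 2 * d * K.+1)%N by nia.
have h2 : ((2 * d * K).+1 ^ n <= (2 * d * K.+1) ^ n)%N.
  case: n hnd hK => [|n] hnd hK; first by rewrite !expn0.
  by rewrite leq_exp2r.
apply: leq_ltn_trans h2 _.
rewrite expnMn -hK.
apply: (@leq_trans (K.+1 ^ n.+1)); first by rewrite expnS ltn_pmul2r ?expn_gt0.
by apply: leq_pexp2l.
Qed.

Section Count.
Variables (F : fieldType) (n d : nat) (phi : 'I_d -> {mpoly F[n]}).
Hypotheses (hnd : (n < d)%N) (hphi : forall i, (msize (phi i) <= 3)%N).

Let K := ((2 * d) ^ n)%N.
Let E := (2 * d * K)%N.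
Let B := {ffun 'I_d -> 'I_K.+1}.
Let B' := {ffun 'I_n -> 'I_E.+1}.
Let mon (k : B) : 'X_{1..d} := [multinom (k i : nat) | i < d].
Let mon' (k : B') : 'X_{1..n} := [multinom (k i : nat) | i < n].
Let G (k : B) : {mpoly F[n]} := \prod_(i < d) phi i ^+ k i.
Let M : 'M[F]_(#|{: B}|, #|{: B'}|) :=
  \matrix_(i, j) (G (enum_val i))@_(mon' (enum_val j)).

Lemma mon_inj : injective mon.
Proof.
move=> k1 k2 /mnmP h; apply/ffunP => i; apply/val_inj.
by have := h i; rewrite !mnmE.
Qed.

Lemma counting : exists H : {mpoly F[d]}, H != 0 /\
  forall b : 'I_n -> F, H.@[fun i => (phi i).@[b]] = 0.
Proof.
have hN : (#|{: B'}| < #|{: B}|)%N.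
  by rewrite !card_ffun !card_ord; apply: pow_ineq.
have [c [c0 cM]] := exists_ker M hN.
exists (\sum_(i < #|{: B}|) c 0 i *: 'X_[mon (enum_val i)]); split.
  case: (pickP (fun i => c 0 i != 0)) => [i0 hi0 | h]; last first.
    by case/eqP: c0; apply/rowP => i; apply/eqP; rewrite mxE -[_ == _]negbK h.
  apply/eqP => /(congr1 (mcoeff (mon (enum_val i0)))).
  rewrite raddf_sum (bigD1 i0) //= mcoeffZ mcoeffX eqxx mulr1 big1 ?addr0 ?mcoeff0.
    by move/eqP; rewrite (negbTE hi0).
  move=> i hi; rewrite mcoeffZ mcoeffX.
  case: eqP => [/mon_inj/enum_val_inj e|_]; last by rewrite mulr0.
  by rewrite e eqxx in hi.
move=> b.
have -> : (\sum_(i < #|{: B}|) c 0 i *: 'X_[mon (enum_val i)]).@[fun i => (phi i).@[b]]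
   = (\sum_(i < #|{: B}|) c 0 i *: G (enum_val i)).@[b].
  rewrite !raddf_sum; apply: eq_bigr => i _.
  rewrite /= !mevalZ mevalX rmorph_prod; congr (_ * _); apply: eq_bigr => j _.
  by rewrite rmorphXn mnmE.
suff -> : \sum_(i < #|{: B}|) c 0 i *: G (enum_val i) = 0 by rewrite meval0.
apply/mpolyP => mo; rewrite mcoeff0 raddf_sum /=.
have [hle|hgt] := leqP (mdeg mo) E.
  pose k' : B' := [ffun i => inord (mo i)].
  have hk' : mon' k' = mo.
    apply/mnmP => i; rewrite mnmE ffunE inordK //.
    rewrite ltnS; apply: (leq_trans _ hle); rewrite mdegE (bigD1 i) //=; exact: leq_addr.
  apply: (etrans (_ : _ = (c *m M) 0 (enum_rank k'))); last by rewrite cM mxE.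
  rewrite mxE; apply: eq_bigr => i _.
  by rewrite mcoeffZ mxE enum_rankK hk'.
apply: big1 => i _; rewrite mcoeffZ.
suff /eqP -> : (G (enum_val i))@_mo == 0 by rewrite mulr0.
rewrite mcoeff_eq0; apply: msize_mdeg_ge.
apply: leq_trans (msize_prod_le _ hphi) _.
apply: (leq_trans _ hgt); rewrite ltnS /E.
have : (\sum_(j < d) enum_val i j * 2 <= \sum_(j < d) K * 2)%N.
  by apply: leq_sum => j _; rewrite leq_mul2r -ltnS ltn_ord orbT.
rewrite sum_nat_const card_ord => h; apply: (leq_trans h).
by rewrite (mulnC 2 d) -mulnA (mulnC 2 K).
Qed.

End Count.
Lemma coef_monic_of_lt (F : fieldType) d (a : 'I_d -> F) (k : 'I_d) :
  (monic_of a)`_k = a k.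
Proof.
rewrite /monic_of coefD coefXn coef_sum.
under eq_bigr => i _ do rewrite coefCM coefXn.
rewrite (bigD1 k) //= eqxx mulr1 big1 ?addr0.
  by rewrite (ltn_eqF (ltn_ord k)) add0r.
move=> i hi; case: eqP => [e|]; last by rewrite mulr0.
by case/eqP: hi; apply/val_inj.
Qed.

Lemma coef_monic_of_ge (F : fieldType) d (a : 'I_d -> F) k :
  (d <= k)%N -> (monic_of a)`_k = (k == d)%:R.
Proof.
move=> hk.
rewrite /monic_of coefD coefXn coef_sum.
under eq_bigr => i _ do rewrite coefCM coefXn.
rewrite big1 ?addr0 1?eq_sym // => i _; case: eqP => [e|]; last by rewrite mulr0.
by have := ltn_ord i; rewrite -e ltnNge hk.
Qed.

Lemma size_monic_of (F : fieldType) d (a : 'I_d -> F) :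
  size (monic_of a) = d.+1.
Proof.
apply/eqP; rewrite eqn_leq; apply/andP; split.
  apply/leq_sizeP => j hj; rewrite coef_monic_of_ge ?(gtn_eqF hj) //.
  exact: ltnW.
rewrite ltnNge; apply/negP => /leq_sizeP /(_ d (leqnn d)).
by rewrite coef_monic_of_ge // eqxx => /eqP; rewrite oner_eq0.
Qed.

Lemma monic_of_monic (F : fieldType) d (a : 'I_d -> F) : monic_of a \is monic.
Proof.
by apply/monicP; rewrite lead_coefE size_monic_of coef_monic_of_ge ?eqxx.
Qed.
Section Param.
Variables (F : fieldType) (d : nat) (alpha : F) (m : nat).
Hypotheses (hm1 : (1 <= m)%N) (hm2 : (m <= d.-1)%N).

Let n := d.-1.
Definition var (k : nat) : {mpoly F[n]} :=
  if (insub k : option 'I_n) is Some i then 'X_i else 0.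

Definition Qm : {poly {mpoly F[n]}} :=
  \poly_(j < m.+1) (if j == m then 1 else if j == 0%N then alpha%:MP else var j.-1).
Definition Rm : {poly {mpoly F[n]}} :=
  \poly_(j < (d - m).+1) (if j == (d - m)%N then 1 else var (m.-1 + j)).
Definition phi (i : 'I_d) : {mpoly F[n]} := (Qm * Rm)`_i.

Lemma msize_var k : (msize (var k) <= 2)%N.
Proof.
rewrite /var; case: insubP => [i _ _|_]; last by rewrite msize0.
by rewrite msizeX mdeg1.
Qed.

Lemma msize_C c : (msize (c%:MP : {mpoly F[n]}) <= 2)%N.
Proof. by rewrite mmeasureC; case: (c != 0). Qed.

Lemma msize_Q j : (msize Qm`_j <= 2)%N.
Proof.
rewrite coef_poly; case: ltnP => _; last by rewrite msize0.
case: eqP => _; first by rewrite msize1.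
case: eqP => _; [exact: msize_C | exact: msize_var].
Qed.

Lemma msize_R j : (msize Rm`_j <= 2)%N.
Proof.
rewrite coef_poly; case: ltnP => _; last by rewrite msize0.
case: eqP => _; [by rewrite msize1 | exact: msize_var].
Qed.

Lemma msize_phi i : (msize (phi i) <= 3)%N.
Proof.
rewrite /phi coefM.
apply: (big_ind (fun p : {mpoly F[n]} => msize p <= 3)%N).
- by rewrite msize0.
- move=> x y hx hy; apply: leq_trans (@mmeasureD_le _ _ mdeg x y) _; rewrite geq_max hx hy.
  by [].
move=> j _; apply: leq_trans (msizeM_le' _ _) _.
have := leq_add (msize_Q j) (msize_R (i - j)); lia.
Qed.

Lemma param (a : 'I_d -> F) (q : {poly F}) :
  q \is monic -> (q %| monic_of a)%R -> (size q).-1 = m -> q`_0 = alpha ->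
  exists b : 'I_n -> F, forall i, (phi i).@[b] = a i.
Proof.
move=> qmon qdvd qsz q0.
set f := monic_of a.
set r := f %/ q.
have fE : r * q = f by rewrite /r divpK.
have q0' : q != 0 by apply: monic_neq0.
have f0 : f != 0 by apply: monic_neq0; apply: monic_of_monic.
have r0 : r != 0 by apply: contraNneq f0 => e; rewrite -fE e mul0r.
have hsq : size q = m.+1.
  by rewrite -qsz prednK // size_poly_gt0.
have hsr : size r = (d - m).+1.
  have := size_mul r0 q0'; rewrite fE /f size_monic_of hsq.
  have := size_poly_gt0 r; rewrite r0; have := hm2; have := hm1; rewrite /n; move=> h1 h2 _ e; rewrite addnS /= in e; apply/eqP; rewrite -(eqn_add2r m) -e; apply/eqP; lia.
have rmon : lead_coef r = 1.
  have := lead_coefM r q; rewrite fE (monicP qmon) mulr1 => <-.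
  exact/monicP/monic_of_monic.
pose b0 (k : nat) := if (k < m.-1)%N then q`_k.+1 else r`_(k - m.-1).
exists (fun i => b0 i) => i.
have var_ev k : (k < n)%N -> (var k).@[fun i => b0 i] = b0 k.
  rewrite /var => hk; case: insubP => [j _ ej|]; last by rewrite hk.
  by rewrite mevalXU ej.
have hQ : map_poly (meval (fun i => b0 i)) Qm = q.
  apply/polyP => j; rewrite coef_map /= coef_poly.
  case: ltnP => hj; last first.
    by rewrite meval0 nth_default // hsq.
  case: eqP => [->|hjm]; first by rewrite meval1 -(monicP qmon) lead_coefE hsq.
  case: eqP => [->|hj0]; first by rewrite mevalC q0.
  rewrite var_ev; last by rewrite /n; lia.
  rewrite /b0 ifT; last by lia.
  by rewrite prednK //; case: j hj hjm hj0.
have hR : map_poly (meval (fun i => b0 i)) Rm = r.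
  apply/polyP => j; rewrite coef_map /= coef_poly.
  case: ltnP => hj; last first.
    by rewrite meval0 nth_default // hsr.
  case: eqP => [->|hjm]; first by rewrite meval1 -rmon lead_coefE hsr.
  rewrite var_ev; last by rewrite /n; lia.
  rewrite /b0 ifF; last by lia.
  by congr (r`_ _); lia.
rewrite /phi -coef_map rmorphM /= hQ hR mulrC fE.
exact: coef_monic_of_lt.
Qed.

End Param.

Theorem theorem2p1 (F : fieldType) (d : nat) (hd : (2 <= d)%N) (alpha : F) :
  exists H : {mpoly F[d]}, H != 0 /\
    forall a : 'I_d -> F, in_calP alpha a -> H.@[a] = 0.
Proof.
have main : forall N, (N <= d.-1)%N -> exists H : {mpoly F[d]}, H != 0 /\
   forall (a : 'I_d -> F) (q : {poly F}), q \is monic -> (q %| monic_of a)%R ->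
     (1 <= (size q).-1 <= N)%N -> q`_0 = alpha -> H.@[a] = 0.
  elim => [|N ih] hN.
    exists 1; split; first exact: oner_neq0.
    by move=> a q _ _ /andP[h1 h2]; lia.
  have [H1 [nz1 h1]] := ih (ltnW hN).
  have hn : (d.-1 < d)%N by lia.
  have [H2 [nz2 h2]] := counting hn (@msize_phi F d alpha N.+1 (ltn0Sn N) hN).
  exists (H1 * H2); split; first by rewrite mulf_neq0.
  move=> a q qm qd /andP[ha hb] q0; rewrite mevalM.
  case: (ltnP ((size q).-1) N.+1) => hlt.
    by rewrite (h1 a q) ?mul0r //; apply/andP; split => //; lia.
  have hs : (size q).-1 = N.+1 by lia.
  have [b hb'] := @param F d alpha N.+1 (ltn0Sn N) hN a q qm qd hs q0.
  have -> : H2.@[a] = H2.@[fun i => (phi alpha N.+1 i).@[b]].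
    by apply: meval_eq => i; rewrite hb'.
  by rewrite h2 mulr0.
have [H [nzH hH]] := main d.-1 (leqnn _).
exists H; split => // a [q [qm qd hq q0]].
exact: hH qm qd hq q0.
Qed.
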